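(* For all $x\in[0,1]$, $$\arcsin x \le \frac{\frac{\pi}{\pi-2}\,x}{\frac{2}{\pi-2}+\sqrt{1-x^2}},$$ with equality at both endpoints $x=0$ and $x=1$. *)

(* Defs.v *)
From Stdlib Require Import Reals.

(* Main.v *)
Require Import Defs.
From Stdlib Require Import Reals.
From Stdlib Require Import Lra.
From Coquelicot Require Import Coquelicot.
Open Scope R_scope.

Definition Dn (t : R) := 2 + (PI - 2) * cos t.
Definition phi (t : R) := PI * sin t / (2 + (PI - 2) * cos t) - t.
Definition dphi (t : R) :=
  PI * (2 * cos t + PI - 2) / ((2 + (PI - 2) * cos t) * (2 + (PI - 2) * cos t)) - 1.

Lemma PI_gt2 : 2 < PI.
Proof. generalize PI2_1; lra. Qed.

Lemma cos_range t : 0 <= t <= PI / 2 -> 0 <= cos t <= 1.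
Proof.
  intros H. split. apply cos_ge_0; lra. apply COS_bound.
Qed.

Lemma Dn_pos t : 0 <= t <= PI / 2 -> 0 < 2 + (PI - 2) * cos t.
Proof.
  intros H. pose proof (cos_range t H). pose proof PI_gt2.
  assert (0 <= (PI - 2) * cos t) by (apply Rmult_le_pos; lra). lra.
Qed.

Lemma phi_deriv t : 0 <= t <= PI / 2 -> derivable_pt_lim phi t (dphi t).
Proof.
  intros H. apply is_derive_Reals. unfold phi, dphi.
  pose proof (Dn_pos t H).
  auto_derive. lra.
  pose proof (sin2 t). unfold Rsqr in *.
  field_simplify_eq; [|lra].
  replace (sin t ^ 2) with (1 - cos t ^ 2) by (simpl; lra). ring.
Qed.

Lemma dphi_sign t : 0 <= t <= PI / 2 ->
  let c := cos t in
  let k := 4 + 2 * PI - PI * PI in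
  ((PI - 2) * (PI - 2) * c >= k -> dphi t >= 0) /\
  ((PI - 2) * (PI - 2) * c <= k -> dphi t <= 0).
Proof.
  intros H c k. pose proof (Dn_pos t H). pose proof (cos_range t H).
  fold c in H0, H1.
  assert (E : dphi t = (1 - c) * ((PI - 2) * (PI - 2) * c - k) /
     ((2 + (PI - 2) * c) * (2 + (PI - 2) * c))).
  { unfold dphi, k. fold c. field. lra. }
  assert (P : 0 < (2 + (PI - 2) * c) * (2 + (PI - 2) * c)) by nra.
  rewrite E; split; intros; unfold Rdiv.
  - apply Rle_ge. apply Rmult_le_pos. apply Rmult_le_pos; lra.
    left; apply Rinv_0_lt_compat; lra.
  - apply Rmult_le_0_r. apply Rmult_le_0_l; lra.
    left; apply Rinv_0_lt_compat; lra.
Qed.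

Lemma phi_nonneg t : 0 <= t <= PI / 2 -> 0 <= phi t.
Proof.
  intros H. pose proof PI_gt2.
  set (k := 4 + 2 * PI - PI * PI).
  destruct (Rle_dec k ((PI - 2) * (PI - 2) * cos t)) as [Hc|Hc].
  - destruct (Req_dec t 0) as [->|Ht].
    + unfold phi. rewrite sin_0, cos_0. unfold Rdiv. lra.
    + destruct (MVT_cor2 phi dphi 0 t) as [c [Eq Hcc]]. lra.
      intros c Hc'. apply phi_deriv. lra.
      assert (phi 0 = 0) by (unfold phi; rewrite sin_0, cos_0; unfold Rdiv; lra).
      assert (cos t <= cos c) by (apply cos_decr_1; lra).
      assert (dphi c >= 0).
      { apply (dphi_sign c). lra. fold k.
        assert ((PI - 2) * (PI - 2) * cos t <= (PI - 2) * (PI - 2) * cos c).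
        { apply Rmult_le_compat_l. nra. lra. } lra. }
      nra.
  - destruct (Req_dec t (PI / 2)) as [->|Ht].
    + unfold phi. rewrite sin_PI2, cos_PI2. field_simplify; lra.
    + destruct (MVT_cor2 phi dphi t (PI / 2)) as [c [Eq Hcc]]. lra.
      intros c Hc'. apply phi_deriv. lra.
      assert (phi (PI / 2) = 0) by
        (unfold phi; rewrite sin_PI2, cos_PI2; field; lra).
      assert (cos c <= cos t) by (apply cos_decr_1; lra).
      assert (dphi c <= 0).
      { apply (dphi_sign c). lra. fold k.
        assert ((PI - 2) * (PI - 2) * cos c <= (PI - 2) * (PI - 2) * cos t).
        { apply Rmult_le_compat_l. nra. lra. } lra. }
      nra.
Qed.

Theorem mainTheorem1 :
  (forall x : R, 0 <= x <= 1 ->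
     asin x <= (PI / (PI - 2) * x) / (2 / (PI - 2) + sqrt (1 - x ^ 2)))
  /\ asin 0 = (PI / (PI - 2) * 0) / (2 / (PI - 2) + sqrt (1 - 0 ^ 2))
  /\ asin 1 = (PI / (PI - 2) * 1) / (2 / (PI - 2) + sqrt (1 - 1 ^ 2)).
Proof.
  pose proof PI_gt2.
  split; [|split].
  - intros x Hx.
    set (t := asin x).
    assert (Ht : 0 <= t <= PI / 2).
    { pose proof (asin_bound x) as B; fold t in B. split; [|lra].
      destruct (Rle_dec 0 t) as [h|h]; [exact h|].
      exfalso. assert (B0 : sin t < 0) by (apply sin_lt_0_var; lra).
      unfold t in B0. rewrite sin_asin in B0; lra. }
    assert (Hs : sin t = x) by (apply sin_asin; lra).
    assert (Hc : cos t = sqrt (1 - x ^ 2)).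
    { unfold t. rewrite cos_asin by lra. unfold Rsqr. f_equal. ring. }
    pose proof (phi_nonneg t Ht). unfold phi in H0.
    rewrite Hs, Hc in H0. pose proof (Dn_pos t Ht). rewrite Hc in H1.
    replace (PI / (PI - 2) * x / (2 / (PI - 2) + sqrt (1 - x ^ 2)))
      with (PI * x / (2 + (PI - 2) * sqrt (1 - x ^ 2))). lra.
    field. split; lra.
  - rewrite asin_0. unfold Rdiv. ring.
  - rewrite asin_1. replace (1 - 1 ^ 2) with 0 by ring. rewrite sqrt_0.
    field. lra.
Qed.
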